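(* Let $x$ and $y$ be finite sequences of strings and $\lambda\ge0$. For every valid labeled summary tree $T$ representing $x$ and $y$, $\mathsf{EDG}(x,y,\lambda)\le\mathrm{error}_\lambda(T)$.
   Context: Strings are over a finite alphabet; $\varepsilon$ is the empty string and $\mathsf{ED}$ is Levenshtein edit distance (unit costs). $\mathsf{AED}(x,y)$ for string sequences is the minimum cost of transforming $x$ into $y$ using only inserting a string $w$ into $x$ (cost $\mathsf{ED}(w,\varepsilon)$) and substituting a string $w$ of $x$ by $w'$ (cost $\mathsf{ED}(w,w')$), with no deletions (defined only if $|x|\le|y|$). A labeled summary tree of $\{x,y\}$ is a rooted tree $T$ with a sentinel root, other nodes labeled by strings, with $x$ and $y$ assigned to nodes $v_x,v_y$; $L_T(v)$ is the label sequence on the root-to-$v$ path excluding the sentinel; $|T|$ counts non-sentinel nodes. It is valid if $|x|\le|L_T(v_x)|$ and $|y|\le|L_T(v_y)|$, and $\mathrm{error}_\lambda(T)=\mathsf{AED}(x,L_T(v_x))+\mathsf{AED}(y,L_T(v_y))+\lambda|T|$. $\mathsf{EDG}(i,j,\lambda)$ ($1\le i\le|x|+1$, $1\le j\le|y|+1$): $\mathsf{EDG}(|x|+1,|y|+1,\lambda)=0$, $\mathsf{EDG}(i,|y|+1,\lambda)=\lambda(|x|-i+1)$, $\mathsf{EDG}(|x|+1,j,\lambda)=\lambda(|y|-j+1)$, and otherwise the minimum of $\mathsf{EDG}(i+1,j+1,\lambda)+\lambda+\mathsf{ED}(x_i,y_j)$, $\mathsf{EDG}(i,j+1,\lambda)+\lambda+\mathsf{ED}(\varepsilon,y_j)$,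 $\mathsf{EDG}(i+1,j,\lambda)+\lambda+\mathsf{ED}(x_i,\varepsilon)$, and $\lambda(|x|-i+1)+\lambda(|y|-j+1)$; $\mathsf{EDG}(x,y,\lambda)=\mathsf{EDG}(1,1,\lambda)$. *)

(* Defs.v *)
From HB Require Import structures.
From mathcomp Require Import all_boot all_order all_algebra.
From Stdlib Require Import ClassicalEpsilon.
Set Implicit Arguments. Unset Strict Implicit. Unset Printing Implicit Defensive.
Import Order.TTheory GRing.Theory Num.Theory.

Section Strings.
Variable A : finType.

(** Levenshtein edit distance (unit-cost insertions, deletions, substitutions),
    via the standard Wagner--Fischer recursion:
      ED [] t = |t|,  ED s [] = |s|,
      ED (a::s) (b::t) = min (ED s t + [a<>b]) (ED s (b::t) + 1) (ED (a::s) t + 1). *)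
Fixpoint ED (s t : seq A) {struct s} : nat :=
  match s with
  | [::] => size t
  | a :: s' =>
      let fix ED_a (t : seq A) : nat :=
        match t with
        | [::] => size s
        | b :: t' => minn (ED s' t' + (a != b)) (minn (ED s' t).+1 (ED_a t').+1)
        end
      in ED_a t
  end.

Definition aed_step (x x' : seq (seq A)) (c : nat) : Prop :=
  (exists p q w, x = p ++ q /\ x' = p ++ w :: q /\ c = ED w [::]) \/
  (exists p q w w', x = p ++ w :: q /\ x' = p ++ w' :: q /\ c = ED w w').

Inductive aed_trans : seq (seq A) -> seq (seq A) -> nat -> Prop :=
  | aed_refl x : aed_trans x x 0
  | aed_cons x x' y c c' :
      aed_step x x' c -> aed_trans x' y c' -> aed_trans x y (c + c').

Definition is_AED (x y : seq (seq A)) (d : nat) : Prop :=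
  aed_trans x y d /\ forall c, aed_trans x y c -> d <= c.

(** AED(x,y): the minimum cost (chosen classically; it exists whenever
    |x| <= |y|, which is the only case where it is used). *)
Definition AED (x y : seq (seq A)) : nat :=
  epsilon (inhabits 0%N) (fun d => is_AED x y d).

(** A non-sentinel node carries a string label and a
    list of children; the tree itself is the list of children of the sentinel
    root.  Nodes are addressed by paths of child indices from the sentinel
    root ([[::]] addresses the sentinel itself). *)
Inductive stree : Type := Node of seq A & seq stree.

Definition summary_tree := seq stree.

Definition dummy_node : stree := Node [::] [::].

(** [labels_at T v] = Some L_T(v) if [v] addresses a node of [T]
    (labels along the root-to-v path, sentinel excluded), None otherwise. *)
Fixpoint labels_at (T : seq stree) (v : seq nat) : option (seq (seq A)) :=
  match v with
  | [::] => Some [::]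
  | i :: v' =>
      if i < size T then
        let: Node l ch := nth dummy_node T i in
        omap (cons l) (labels_at ch v')
      else None
  end.

Definition is_node (T : summary_tree) (v : seq nat) : bool :=
  labels_at T v != None.

Definition L_T (T : summary_tree) (v : seq nat) : seq (seq A) :=
  odflt [::] (labels_at T v).

Fixpoint stree_size (t : stree) : nat :=
  let: Node _ ch := t in (sumn (map stree_size ch)).+1.

Definition tsize (T : summary_tree) : nat := sumn (map stree_size T).

Definition valid_summary (x y : seq (seq A)) (T : summary_tree) (vx vy : seq nat) : bool :=
  [&& is_node T vx, is_node T vy,
      size x <= size (L_T T vx) & size y <= size (L_T T vy)].

Local Open Scope ring_scope.

Definition error_lam (R : numDomainType) (lam : R) (x y : seq (seq A))
    (T : summary_tree) (vx vy : seq nat) : R :=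
  (AED x (L_T T vx))%:R + (AED y (L_T T vy))%:R + lam * (tsize T)%:R.

(** EDG, defined on suffixes: [EDGs (drop (i-1) x) (drop (j-1) y) lam]
    is EDG(i,j,lam). *)
Fixpoint EDGs (R : numDomainType) (lam : R) (xs ys : seq (seq A)) {struct xs} : R :=
  match xs with
  | [::] => lam * (size ys)%:R
  | a :: xs' =>
      let fix EDG_a (ys : seq (seq A)) : R :=
        match ys with
        | [::] => lam * (size xs)%:R
        | b :: ys' =>
            Num.min (Num.min (Num.min
              (EDGs lam xs' ys' + lam + (ED a b)%:R)
              (EDG_a ys' + lam + (ED [::] b)%:R))
              (EDGs lam xs' ys + lam + (ED a [::])%:R))
              (lam * (size xs)%:R + lam * (size ys)%:R)
        end
      in EDG_a ys
  end.

Definition EDG (R : numDomainType) (x y : seq (seq A)) (lam : R) : R :=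
  EDGs lam x y.

End Strings.

(* Main.v *)
Require Import Defs.
From HB Require Import structures.
From mathcomp Require Import all_boot all_order all_algebra.
From mathcomp Require Import zify lra.
From Stdlib Require Import ClassicalEpsilon Classical.
Set Implicit Arguments. Unset Strict Implicit.
Import Order.TTheory GRing.Theory Num.Theory.

Section Helpers.
Variable A : finType.
Implicit Types (s t u w : seq A) (x y L : seq (seq A)).

Lemma EDE (a b : A) s t : ED (a::s) (b::t) =
  minn (ED s t + (a != b)) (minn (ED s (b::t)).+1 (ED (a::s) t).+1).
Proof. by []. Qed.

Lemma ED0s t : ED [::] t = size t. Proof. by []. Qed.
Lemma EDs0 s : ED s [::] = size s. Proof. by case: s. Qed.

Lemma ED_lb s t : size s - size t <= ED s t /\ size t - size s <= ED s t.
Proof.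
elim: s t => [|a s IH] t; first by rewrite ED0s /=; lia.
elim: t => [|b t IHt]; first by rewrite EDs0 /=; lia.
rewrite EDE /=; have := IH t; have := IH (b::t); move: IHt => /=; lia.
Qed.

Lemma ED_ub s t : ED s t <= size s + size t.
Proof.
elim: s t => [|a s IH] t; first by rewrite ED0s.
elim: t => [|b t IHt]; first by rewrite EDs0 /=; lia.
rewrite EDE /=; have := IH t; move: IHt => /=; lia.
Qed.

Lemma ED_sym s t : ED s t = ED t s.
Proof.
elim: s t => [|a s IH] t; first by rewrite ED0s EDs0.
elim: t => [|b t IHt]; first by rewrite EDs0 ED0s.
rewrite !EDE IH (IH (b::t)) IHt eq_sym; lia.
Qed.

Lemma ED_refl s : ED s s = 0%N.
Proof. elim: s => [|a s IH] //; rewrite EDE IH eqxx; lia. Qed.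

Lemma ED_stepl (a : A) s u : ED (a::s) u <= (ED s u).+1.
Proof. case: u => [|c u]; first by rewrite !EDs0. rewrite EDE; lia. Qed.

Lemma ED_stepr (c : A) s u : ED s (c::u) <= (ED s u).+1.
Proof. case: s => [|a s]; first by rewrite !ED0s. rewrite EDE; lia. Qed.

Lemma neq_tri (a b c : A) : ((a != c) <= (a != b) + (b != c))%N.
Proof.
case: (eqVneq a c) => // Hac.
by case: (eqVneq a b) => // Eab; subst; rewrite Hac.
Qed.

Lemma ED_tri_n n s t u : (size s + size t + size u <= n)%N -> ED s u <= ED s t + ED t u.
Proof.
elim: n s t u => [|n IH] s t u Hn.
  by case: s Hn => //; case: t => //; case: u.
case: s Hn => [|a s] Hn.
  rewrite !ED0s; have [_ H] := ED_lb t u; lia.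
case: t Hn => [|b t] Hn.
  rewrite EDs0 ED0s; have := ED_ub (a::s) u; lia.
case: u Hn => [|c u] Hn.
  rewrite !EDs0; have [H _] := ED_lb (a::s) (b::t); lia.
have H1 := IH s (b::t) (c::u) ltac:(move: Hn => /=; lia).
have H2 := IH (a::s) (b::t) u ltac:(move: Hn => /=; lia).
have H3 := IH (a::s) t (c::u) ltac:(move: Hn => /=; lia).
have H5 := IH s t u ltac:(move: Hn => /=; lia).
have H7 := IH s t (c::u) ltac:(move: Hn => /=; lia).
have S1 := ED_stepl a s (c::u).
have S2 := ED_stepr c (a::s) u.
have S4 := ED_stepr c t u.
have N := neq_tri a b c.
have E1 := EDE a b s t. have E2 := EDE b c t u. have E3 := EDE a c s u.
lia.
Qed.

Lemma ED_tri s t u : ED s u <= ED s t + ED t u.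
Proof. exact: (@ED_tri_n (size s + size t + size u)). Qed.

Inductive emb : seq (seq A) -> seq (seq A) -> nat -> Prop :=
| emb_nil L : emb [::] L (sumn (map size L))
| emb_skip x b L c : emb x L c -> emb x (b::L) (c + size b)
| emb_take a x b L c : emb x L c -> emb (a::x) (b::L) (c + ED a b).

Lemma emb_size x L c : emb x L c -> size x <= size L.
Proof. by elim=> //= *; lia. Qed.

Lemma emb_refl x : emb x x 0.
Proof.
elim: x => [|a x IH]; first exact: (emb_nil [::]).
by have := emb_take a a IH; rewrite ED_refl.
Qed.

Lemma emb_ins x L d : emb x L d -> forall p q w, x = p ++ w :: q ->
  exists2 d', emb (p ++ q) L d' & d' <= d + size w.
Proof.
elim=> [L0|x0 b L0 c H IH|a x0 b L0 c H IH] p q w Ex.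
- by case: p Ex.
- have [d' H' Hd] := IH p q w Ex.
  exists (d' + size b); [exact: emb_skip|lia].
- case: p Ex => [|p0 p'] /= [E1 E2].
  + subst; exists (c + size b); first exact: emb_skip.
    have [_ Hl] := ED_lb w b; lia.
  + subst; have [d' H' Hd] := IH p' q w erefl.
    exists (d' + ED p0 b); [exact: emb_take|lia].
Qed.

Lemma emb_sub x L d : emb x L d -> forall p q w w', x = p ++ w' :: q ->
  exists2 d', emb (p ++ w :: q) L d' & d' <= d + ED w w'.
Proof.
elim=> [L0|x0 b L0 c H IH|a x0 b L0 c H IH] p q w w' Ex.
- by case: p Ex.
- have [d' H' Hd] := IH p q w w' Ex.
  exists (d' + size b); [exact: emb_skip|lia].
- case: p Ex => [|p0 p'] /= [E1 E2].
  + subst; exists (c + ED w b); first exact: emb_take.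
    have := ED_tri w w' b; lia.
  + subst; have [d' H' Hd] := IH p' q w w' erefl.
    exists (d' + ED p0 b); [exact: emb_take|lia].
Qed.

Lemma trans_emb x y c : aed_trans x y c -> exists2 d, emb x y d & d <= c.
Proof.
elim=> [x0|x0 x' y0 c0 c' Hs _ [d Hd Hle]]; first by exists 0%N; [exact: emb_refl|].
case: Hs => [[p [q [w [E1 [E2 E3]]]]]|[p [q [w [w' [E1 [E2 E3]]]]]]].
- have [d' H' Hd'] := emb_ins Hd E2.
  exists d'; first by rewrite E1. rewrite E3 EDs0; lia.
- have [d' H' Hd'] := @emb_sub _ _ _ Hd p q w w' E2.
  exists d'; first by rewrite E1. lia.
Qed.

Lemma emb_consE x0 L0 c : emb x0 L0 c -> forall a x b L, x0 = a :: x -> L0 = b :: L ->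
  (exists2 c', emb (a::x) L c' & c = (c' + size b)%N) \/
  (exists2 c', emb x L c' & c = (c' + ED a b)%N).
Proof.
case=> [L1|x1 b1 L1 c1 H|a1 x1 b1 L1 c1 H] a x b L E1 E2 //.
- by case: E2 => ??; subst; left; exists c1.
- by case: E1 => ??; case: E2 => ??; subst; right; exists c1.
Qed.

Lemma aed_lift w x y c : aed_trans x y c -> aed_trans (w::x) (w::y) c.
Proof.
elim=> [x0|x0 x' y0 c0 c' Hs _ IH]; first exact: aed_refl.
apply: aed_cons IH.
case: Hs => [[p [q [w0 [E1 [E2 E3]]]]]|[p [q [w0 [w' [E1 [E2 E3]]]]]]].
- by left; exists (w::p), q, w0; rewrite E1 E2.
- by right; exists (w::p), q, w0, w'; rewrite E1 E2.
Qed.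

Lemma aed_exists L x : size x <= size L -> exists c, aed_trans x L c.
Proof.
elim: L x => [|b L IH] [|a x] //=; first by exists 0%N; exact: aed_refl.
- move=> _; have [c Hc] := IH [::] isT.
  exists (ED b [::] + c); apply: (aed_cons (x':=[:: b])); last exact: aed_lift.
  by left; exists [::], [::], b.
- move=> Hs; have [c Hc] := IH x Hs.
  exists (ED a b + c); apply: (aed_cons (x':=b :: x)); last exact: aed_lift.
  by right; exists [::], x, a, b.
Qed.

Lemma is_AED_ex x L c : aed_trans x L c -> exists d, is_AED x L d.
Proof.
elim/ltn_ind: c => c IH Hc.
case: (classic (exists c', c' < c /\ aed_trans x L c')) => [[c' [Hlt Hc']]|Hno].
  exact: IH Hc'.
exists c; split=> // c'' Hc''; rewrite leqNgt; apply/negP => Hlt.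
by apply: Hno; exists c''.
Qed.

Lemma AED_emb x L : size x <= size L -> exists2 d, emb x L d & d <= AED x L.
Proof.
move=> Hs; have [c Hc] := aed_exists Hs.
have [H _] := epsilon_spec (inhabits 0%N) (fun d => is_AED x L d) (is_AED_ex Hc).
exact: trans_emb H.
Qed.

Lemma nth_size (T : seq (stree A)) i : i < size T ->
  stree_size (nth (@dummy_node A) T i) <= Defs.tsize T.
Proof.
rewrite /Defs.tsize; elim: T i => [|t T IH] [|i] //= Hi; first lia.
have := IH i Hi; lia.
Qed.

Lemma nth2_size (T : seq (stree A)) i j : i != j -> i < size T -> j < size T ->
  stree_size (nth (@dummy_node A) T i) + stree_size (nth (@dummy_node A) T j) <= Defs.tsize T.
Proof.
rewrite /Defs.tsize; elim: T i j => [|t T IH] [|i] [|j] //= Hij Hi Hj.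
- have := @nth_size T j Hj; rewrite /Defs.tsize; lia.
- have := @nth_size T i Hi; rewrite /Defs.tsize; lia.
- have := IH i j Hij Hi Hj; lia.
Qed.

Lemma labels_size (v : seq nat) (T : seq (stree A)) L :
  labels_at T v = Some L -> size L <= Defs.tsize T.
Proof.
elim: v T L => [|i v IH] T L /=; first by case=> <-.
case: ifP => // Hi.
have := nth_size Hi.
case: (nth (@dummy_node A) T i) => l ch /= Hs.
case E: (labels_at ch v) => [L'|] //= [<-] /=.
have := IH _ _ E; rewrite /Defs.tsize in Hs *; lia.
Qed.

Lemma tree_split (vx : seq nat) (T : seq (stree A)) vy Lx Ly :
  labels_at T vx = Some Lx -> labels_at T vy = Some Ly ->
  exists P X Y, [/\ Lx = P ++ X, Ly = P ++ Y & size P + size X + size Y <= Defs.tsize T].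
Proof.
elim: vx T vy Lx Ly => [|i vx IH] T vy Lx Ly.
  case=> <- Hy; exists [::], [::], Ly; split=> //=.
  exact: labels_size Hy.
case: vy => [|j vy] Hx.
  case=> <-; exists [::], Lx, [::]; split=> //=; rewrite addn0.
  exact: labels_size Hx.
move: Hx => /=.
case: ifP => // Hi; case: ifP => // Hj.
case: (eqVneq i j) => [<-|Hij].
  have := nth_size Hi.
  case: (nth (@dummy_node A) T i) => l ch /= Hs.
  case E1: (labels_at ch vx) => [Lx'|] //= [<-].
  case E2: (labels_at ch vy) => [Ly'|] //= [<-].
  have [P [X [Y [-> -> HS]]]] := IH _ _ _ _ E1 E2.
  exists (l :: P), X, Y; split=> //=; move: HS; rewrite /Defs.tsize in Hs *; lia.
have := nth2_size Hij Hi Hj.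
case: (nth (@dummy_node A) T i) => l ch /=.
case: (nth (@dummy_node A) T j) => l' ch' /= Hs.
case E1: (labels_at ch vx) => [Lx'|] //= [<-].
case E2: (labels_at ch' vy) => [Ly'|] //= [<-].
exists [::], (l :: Lx'), (l' :: Ly'); split=> //=.
have := labels_size E1; have := labels_size E2; rewrite /Defs.tsize in Hs *; lia.
Qed.

Variable R : realDomainType.
Local Open Scope ring_scope.

Lemma EC (lam : R) (a b : seq A) x y : EDGs lam (a::x) (b::y) = Num.min (Num.min (Num.min
              (EDGs lam x y + lam + (ED a b)%:R)
              (EDGs lam (a::x) y + lam + (ED [::] b)%:R))
              (EDGs lam x (b::y) + lam + (ED a [::])%:R))
              (lam * (size (a::x))%:R + lam * (size (b::y))%:R).
Proof. by []. Qed.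

Lemma EDGs_le (lam : R) x y : EDGs lam x y <= lam * (size x + size y)%:R.
Proof.
case: x => [|a x]; first by rewrite /= add0n.
case: y => [|b y]; first by rewrite /= addn0.
by rewrite EC ge_min natrD mulrDr lexx orbT.
Qed.

Lemma main_emb (lam : R) : 0 <= lam -> forall P X Y x y cx cy,
  emb x (P ++ X) cx -> emb y (P ++ Y) cy ->
  EDGs lam x y <= cx%:R + cy%:R + lam * (size P + size X + size Y)%:R.
Proof.
move=> lam0; elim=> [|p P IH] X Y x y cx cy Hx Hy.
- have := emb_size Hx; have := emb_size Hy => /= Sy Sx.
  apply: le_trans (EDGs_le lam x y) _.
  have : lam * (size x + size y)%:R <= lam * (size X + size Y)%:R.
    by apply: ler_wpM2l => //; rewrite ler_nat; lia.
  have := ler0n R cx; have := ler0n R cy; rewrite add0n; lra.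
- have Sx := emb_size Hx; have Sy := emb_size Hy.
  have base : (size x + size y <= size (p :: P) + size X + size Y)%N ->
      EDGs lam x y <= cx%:R + cy%:R + lam * (size (p :: P) + size X + size Y)%:R.
    move=> Hs; apply: le_trans (EDGs_le lam x y) _.
    have : lam * (size x + size y)%:R <= lam * (size (p::P) + size X + size Y)%:R.
      by apply: ler_wpM2l => //; rewrite ler_nat.
    have := ler0n R cx; have := ler0n R cy; lra.
  case: x Hx Sx base => [|a x] Hx Sx base.
    by apply: base; move: Sy; rewrite size_cat /=; lia.
  case: y Hy Sy base => [|b y] Hy Sy base.
    by apply: base; move: Sx; rewrite size_cat /=; lia.
  have Hl : lam * (size (p :: P) + size X + size Y)%:R =
            lam * (size P + size X + size Y)%:R + lam.
    by rewrite /= -addnA addSn -addnA mulrS mulrDr mulr1 addrC !addnA.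
  rewrite Hl.
  have tab := ED_tri a p b. have tb := ED_sym p b.
  have ta := ED_tri a p [::]. have tbb := ED_tri b p [::].
  rewrite !EDs0 in ta tbb.
  have pos := ler0n R (size p).
  case: (emb_consE Hx erefl erefl) => [[cx' Hx' ->]|[cx' Hx' ->]];
  case: (emb_consE Hy erefl erefl) => [[cy' Hy' ->]|[cy' Hy' ->]];
  have H := IH _ _ _ _ _ _ Hx' Hy'.
  + rewrite (natrD R cx') (natrD R cy'); lra.
  + rewrite EC ge_min; apply/orP; left; rewrite ge_min; apply/orP; left.
    rewrite ge_min; apply/orP; right; rewrite ED0s (natrD R cx') (natrD R cy').
    have : (size b)%:R <= (size p)%:R + (ED b p)%:R :> R.
      by rewrite -natrD ler_nat; lia.
    move=> H1; lra.
  + rewrite EC ge_min; apply/orP; left; rewrite ge_min; apply/orP; right.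
    rewrite EDs0 (natrD R cx') (natrD R cy').
    have : (size a)%:R <= (ED a p)%:R + (size p)%:R :> R.
      by rewrite -natrD ler_nat; lia.
    move=> H1; lra.
  + rewrite EC ge_min; apply/orP; left; rewrite ge_min; apply/orP; left.
    rewrite ge_min; apply/orP; left; rewrite (natrD R cx') (natrD R cy').
    have : (ED a b)%:R <= (ED a p)%:R + (ED b p)%:R :> R.
      by rewrite -natrD ler_nat; lia.
    move=> H1; lra.
Qed.

End Helpers.

Local Open Scope ring_scope.

Theorem lemma10 (R : realDomainType) (A : finType) (x y : seq (seq A)) (lam : R)
    (T : summary_tree A) (vx vy : seq nat) :
  0 <= lam ->
  valid_summary x y T vx vy ->
  EDG x y lam <= error_lam lam x y T vx vy.
Proof.
move=> lam0 /and4P [Nx Ny Sx Sy].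
rewrite /is_node in Nx Ny; rewrite /L_T in Sx Sy; rewrite /error_lam /L_T /EDG.
case Ex: (labels_at T vx) Nx Sx => [Lx|] // _ /= Sx.
case Ey: (labels_at T vy) Ny Sy => [Ly|] // _ /= Sy.
have [P [X [Y [EX EY HS]]]] := tree_split Ex Ey.
have [dx Hdx Hlx] := AED_emb Sx.
have [dy Hdy Hly] := AED_emb Sy.
rewrite EX in Hdx; rewrite EY in Hdy.
have := main_emb lam0 Hdx Hdy.
have : lam * (size P + size X + size Y)%:R <= lam * (Defs.tsize T)%:R.
  by apply: ler_wpM2l => //; rewrite ler_nat.
have : dx%:R <= (AED x Lx)%:R :> R by rewrite ler_nat.
have : dy%:R <= (AED y Ly)%:R :> R by rewrite ler_nat.
move=> *; lra.
Qed.
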